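(* Let $S$ be an ideal extension of a semigroup $T$ by a semigroup $U$, i.e. $T$ is isomorphic to an ideal $T'$ of $S$ and the Rees quotient $S/T'$ is isomorphic to $U$. If $T$ and $U$ are both defined by finite complete rewriting systems, then $S$ is also defined by a finite complete rewriting system.
   Context: For an ideal $I$ of a semigroup $S$, the Rees quotient $S/I$ is the quotient of $S$ by the congruence $\rho_I$ where $s\,\rho_I\, t$ iff $s=t$ or $s,t\in I$. A rewriting system $\langle X\mid R\rangle$ consists of an alphabet $X$ and rules $u\to v$ with $u,v\in X^+$; it is finite if $X,R$ are finite. One-step reduction: $w_1uw_2\to_R w_1vw_2$ for $(u\to v)\in R$; $\to_R^*$ is its reflexive transitive closure. It is noetherian if there is no infinite chain $w_1\to_R w_2\to_R\cdots$, confluent if $u\to_R^*v$, $u\to_R^*v'$ imply a common $w$ with $v\to_R^*w$, $v'\to_R^*w$, and complete if both. A semigroup is defined by $\langle X\mid R\rangle$ if it is isomorphic to $X^+$ modulo the congruence generated by $R$. *)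

(* Defs.v *)
From Stdlib Require List.
From mathcomp Require Import all_boot.
Set Implicit Arguments. Unset Strict Implicit. Unset Printing Implicit Defensive.

Record semigroup := Semigroup {
  sg_car :> Type;
  sg_op : sg_car -> sg_car -> sg_car;
  sg_assoc : forall x y z, sg_op x (sg_op y z) = sg_op (sg_op x y) z }.

Definition sg_hom (A B : semigroup) (f : A -> B) : Prop :=
  forall x y, f (sg_op x y) = sg_op (f x) (f y).

Definition congruence (A : semigroup) (r : A -> A -> Prop) : Prop :=
  (forall x, r x x) /\ (forall x y, r x y -> r y x) /\
  (forall x y z, r x y -> r y z -> r x z) /\
  (forall x y z, r x y -> r (sg_op z x) (sg_op z y) /\ r (sg_op x z) (sg_op y z)).

(** [A] is isomorphic to the quotient [B / r] (r a congruence on B):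
    there is a surjective homomorphism [B -> A] whose kernel is exactly [r]
    (the induced map B/r -> A is then an isomorphism). *)
Definition iso_quotient (A B : semigroup) (r : B -> B -> Prop) : Prop :=
  exists f : B -> A, sg_hom f /\ (forall a, exists b, f b = a) /\
    (forall b b', f b = f b' <-> r b b').

Definition is_ideal (S : semigroup) (I : S -> Prop) : Prop :=
  (exists t, I t) /\ forall s t, I t -> I (sg_op s t) /\ I (sg_op t s).

Definition rees_cong (S : semigroup) (I : S -> Prop) (s t : S) : Prop :=
  s = t \/ (I s /\ I t).

Definition ideal_extension (S T U : semigroup) : Prop :=
  exists I : S -> Prop, is_ideal I /\
    (exists g : T -> S, sg_hom g /\ injective g /\
        (forall s, I s <-> exists t, g t = s)) /\
    iso_quotient U (rees_cong I).

(** The free semigroup X^+: nonempty words, represented as (first letter, rest). *)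
Definition word (X : Type) := (X * seq X)%type.
Definition wd (X : Type) (w : word X) : seq X := w.1 :: w.2.
Definition wcat (X : Type) (a b : word X) : word X := (a.1, a.2 ++ wd b).

Lemma wcat_assoc (X : Type) (a b c : word X) :
  wcat a (wcat b c) = wcat (wcat a b) c.
Proof. by case: a => x s; case: b => y t; case: c => z u; rewrite /wcat /wd /= -catA. Qed.

Definition free_sg (X : Type) : semigroup := Semigroup (@wcat_assoc X).

Definition rules (X : Type) := seq (word X * word X).

Definition step (X : Type) (R : rules X) (a b : word X) : Prop :=
  exists (w1 w2 : seq X) (u v : word X), List.In (u, v) R /\
    wd a = w1 ++ wd u ++ w2 /\ wd b = w1 ++ wd v ++ w2.

Inductive star (A : Type) (r : A -> A -> Prop) : A -> A -> Prop :=
  | star_refl x : star r x x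
  | star_step x y z : r x y -> star r y z -> star r x z.

Definition noetherian (X : Type) (R : rules X) : Prop :=
  ~ exists f : nat -> word X, forall n, step R (f n) (f n.+1).

Definition confluent (X : Type) (R : rules X) : Prop :=
  forall u v v', star (step R) u v -> star (step R) u v' ->
    exists w, star (step R) v w /\ star (step R) v' w.

Definition complete (X : Type) (R : rules X) : Prop :=
  noetherian R /\ confluent R.

Definition gen_cong (X : Type) (R : rules X) (a b : free_sg X) : Prop :=
  forall r : free_sg X -> free_sg X -> Prop, congruence r ->
    (forall u v, List.In (u, v) R -> r u v) -> r a b.

Definition defines (S : semigroup) (X : Type) (R : rules X) : Prop :=
  iso_quotient S (@gen_cong X R).

Definition fcrs_defined (S : semigroup) : Prop :=
  exists (X : finType) (R : rules X), complete R /\ defines S R.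

(* Main.v *)
Require Import Defs.
From Stdlib Require Import Classical ClassicalEpsilon FunctionalExtensionality.
From mathcomp Require Import all_boot zify.
From Stdlib Require Import Lia.
Set Implicit Arguments. Unset Strict Implicit. Unset Printing Implicit Defensive.

Definition SN (A : Type) (r : A -> A -> Prop) (x : A) := Acc (fun b a => r a b) x.

Section Rew.
Variable X : Type.
Variable R : rules X.

Definition lstep (a b : seq X) : Prop :=
  exists (w1 w2 : seq X) (u v : word X), List.In (u, v) R /\
    a = w1 ++ wd u ++ w2 /\ b = w1 ++ wd v ++ w2.

Definition irr (w : word X) := forall w', ~ step R w w'.

Lemma wd_wcat (a b : word X) : wd (wcat a b) = wd a ++ wd b.
Proof. by case: a. Qed.

Lemma wd_inj (a b : word X) : wd a = wd b -> a = b.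
Proof. by case: a => x s; case: b => y t [-> ->]. Qed.

Lemma step_wcatl z a b : step R a b -> step R (wcat z a) (wcat z b).
Proof.
case=> w1 [w2 [u [v [H [Ha Hb]]]]]; exists (wd z ++ w1), w2, u, v; split => //.
by rewrite !wd_wcat Ha Hb !catA.
Qed.

Lemma step_wcatr z a b : step R a b -> step R (wcat a z) (wcat b z).
Proof.
case=> w1 [w2 [u [v [H [Ha Hb]]]]]; exists w1, (w2 ++ wd z), u, v; split => //.
by rewrite !wd_wcat Ha Hb -!catA.
Qed.

Lemma star_trans' (A : Type) (r : A -> A -> Prop) x y z :
  star r x y -> star r y z -> star r x z.
Proof. elim=> // x0 y0 z0 H _ IH Hz; exact: star_step H (IH Hz). Qed.

Lemma star_map (f : word X -> word X) :
  (forall a b, step R a b -> step R (f a) (f b)) ->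
  forall a b, star (step R) a b -> star (step R) (f a) (f b).
Proof. move=> Hf a b; elim=> [x|x y z H _ IH]; [exact: star_refl| exact: star_step (Hf _ _ H) IH]. Qed.

Definition joinable (a b : free_sg X) :=
  exists c, star (step R) a c /\ star (step R) b c.

Lemma joinable_cong : confluent R -> congruence joinable.
Proof.
move=> Hc; split; [|split; [|split]].
- move=> x; exists x; split; exact: star_refl.
- by move=> x y [c [H1 H2]]; exists c.
- move=> x y z [p [H1 H2]] [q [H3 H4]].
  have [r [H5 H6]] := Hc _ _ _ H2 H3.
  exists r; split; [exact: star_trans' H1 H5|exact: star_trans' H4 H6].
- move=> x y z [c [H1 H2]]; split.
  + exists (wcat z c); split; apply: (star_map (f := wcat z)) => //; exact: step_wcatl.
  + exists (wcat c z); split; apply: (star_map (f := fun w => wcat w z)) => //; exact: step_wcatr.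
Qed.

Lemma rule_step u v : List.In (u, v) R -> step R u v.
Proof. by move=> H; exists [::], [::], u, v; rewrite !cats0. Qed.

Lemma star_irr a b : star (step R) a b -> irr a -> a = b.
Proof. by case=> // x y z H _ Hi; case: (Hi _ H). Qed.

Lemma NFU a b : confluent R -> gen_cong R a b -> irr a -> irr b -> a = b.
Proof.
move=> Hc Hg Ha Hb.
have [c [H1 H2]] : joinable a b.
  apply: Hg; first exact: joinable_cong.
  move=> u v H; exists v; split; [exact: star_step (rule_step H) (star_refl _ _)|exact: star_refl].
by rewrite (star_irr H1 Ha) (star_irr H2 Hb).
Qed.

Lemma gen_refl a : gen_cong R a a.
Proof. by move=> r [H _] _. Qed.
Lemma gen_sym a b : gen_cong R a b -> gen_cong R b a.
Proof. by move=> H r Hr HR; case: (Hr) => _ [Hs _]; apply: Hs; apply: H. Qed.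
Lemma gen_trans a b c : gen_cong R a b -> gen_cong R b c -> gen_cong R a c.
Proof. by move=> H1 H2 r Hr HR; case: (Hr) => _ [_ [Ht _]]; apply: Ht (H1 r Hr HR) (H2 r Hr HR). Qed.

Definition app (a : word X) (s : seq X) : word X := (a.1, a.2 ++ s).
Definition pre (s : seq X) (a : word X) : word X :=
  if s is z :: s' then (z, s' ++ wd a) else a.

Lemma cong_app (r : free_sg X -> free_sg X -> Prop) a b s :
  congruence r -> r a b -> r (app a s) (app b s).
Proof.
move=> [_ [_ [_ Hc]]] Hab; elim/last_ind: s => [|s z IH].
  have E : forall c, app c [::] = c by case=> ? ?; rewrite /app /= cats0.
  by rewrite !E.
have -> : app a (rcons s z) = wcat (app a s) (z, [::]) by rewrite /app /wcat /= -cats1 catA.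
have -> : app b (rcons s z) = wcat (app b s) (z, [::]) by rewrite /app /wcat /= -cats1 catA.
by case: (Hc _ _ (z, [::]) IH).
Qed.

Lemma cong_pre (r : free_sg X -> free_sg X -> Prop) a b s :
  congruence r -> r a b -> r (pre s a) (pre s b).
Proof.
move=> Hr Hab; case: (Hr) => _ [_ [_ Hc]]; elim: s => // z s IH.
have E : forall c, pre (z :: s) c = wcat (z, [::]) (pre s c).
  by move=> c; case: s {IH} => //= y s; rewrite /wcat /= -catA.
by rewrite !E; case: (Hc _ _ (z, [::]) IH).
Qed.

Lemma wd_pre s a : wd (pre s a) = s ++ wd a.
Proof. by case: s. Qed.
Lemma wd_app a s : wd (app a s) = wd a ++ s.
Proof. by case: a. Qed.

Lemma step_gen a b : step R a b -> gen_cong R a b.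
Proof.
case=> w1 [w2 [u [v [H [Ha Hb]]]]] r Hr HR.
have -> : a = pre w1 (app u w2) by apply: wd_inj; rewrite wd_pre wd_app ?Ha ?Hb.
have -> : b = pre w1 (app v w2) by apply: wd_inj; rewrite wd_pre wd_app ?Ha ?Hb.
by apply: cong_pre => //; apply: cong_app => //; apply: HR.
Qed.

Lemma star_gen a b : star (step R) a b -> gen_cong R a b.
Proof. elim=> [x|x y z H _ IH]; [exact: gen_refl|exact: gen_trans (step_gen H) IH]. Qed.

Lemma SN_nf w : SN (step R) w -> exists n, star (step R) w n /\ irr n.
Proof.
elim=> {}w _ IH.
case: (classic (exists w', step R w w')) => [[w' H]|H].
  have [n [H1 H2]] := IH _ H; exists n; split => //; exact: star_step H H1.
exists w; split; first exact: star_refl.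
by move=> w' Hs; apply: H; exists w'.
Qed.

Lemma SN_noeth : (forall w, SN (step R) w) -> noetherian R.
Proof.
move=> HS [f Hf].
suff: forall w, SN (step R) w -> forall n, f n <> w by move/(_ _ (HS (f 0)) 0).
move=> w; elim=> {}w _ IH n E; apply: (IH (f n.+1)) (erefl _).
by rewrite -E.
Qed.

Lemma noeth_SN : noetherian R -> forall w, SN (step R) w.
Proof.
move=> HN w0; apply: NNPP => H0.
have next : forall w : {w | ~ SN (step R) w}, {w' : {w | ~ SN (step R) w} | step R (sval w) (sval w')}.
  move=> [w Hw]; apply: constructive_indefinite_description.
  apply: NNPP => Hn; apply: (Hw); constructor => w' Hs.
  apply: NNPP => Hw'; apply: Hn; by exists (exist _ w' Hw').
pose g := fix g n := if n is n'.+1 then sval (next (g n')) else exist _ w0 H0.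
apply: HN; exists (fun n => sval (g n)) => n /=.
exact: (svalP (next (g n))).
Qed.

Lemma SN_lstep : (forall w, SN (step R) w) -> forall l, SN lstep l.
Proof.
move=> HS [|z s]; first by constructor => b [w1 [w2 [u [v [_ [E _]]]]]]; case: w1 E.
suff H : forall w, SN (step R) w -> SN lstep (wd w) by exact: (H (z, s)).
move=> w; elim=> {}w _ IH.
constructor => b Hb; case: (Hb) => w1 [w2 [u [v [_ [_ Eb]]]]].
have [z' [s' E']] : exists z' s', b = z' :: s'.
  by case: w1 Eb => [|y w1] ->; [case: v => y t; exists y, (t ++ w2)|exists y, (w1 ++ wd v ++ w2)].
rewrite E'; apply: (IH (z', s')); rewrite /step -[wd (z', s')]/(z' :: s') -E'; exact: Hb.
Qed.

End Rew.


Section Factor.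
Variable Y : Type.
Variable RU : rules Y.

Definition eY (b c : seq Y) : Prop :=
  lstep RU b c \/ exists s t, b = s ++ c ++ t /\ 0 < size (s ++ t).

Lemma lstep_ctx s t p p' : lstep RU p p' -> lstep RU (s ++ p ++ t) (s ++ p' ++ t).
Proof.
case=> w1 [w2 [u [v [H [-> ->]]]]]; exists (s ++ w1), (w2 ++ t), u, v; split => //.
by rewrite -!catA.
Qed.

Lemma SN_eY : (forall b, SN (lstep RU) b) -> forall b, SN eY b.
Proof.
move=> HS b.
suff H : forall b, SN (lstep RU) b -> forall s p t, b = s ++ p ++ t -> SN eY p.
  by apply: (H b (HS b) [::] b [::]); rewrite cats0.
move=> {}b; elim=> {}b _ IH.
suff H : forall n s p t, size p <= n -> b = s ++ p ++ t -> SN eY p.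
  by move=> s p t; apply: (H (size p)).
elim=> [|n IHn] s p t Hs Eb; constructor => c [Hc|[s' [t' [Ep Hz]]]].
- apply: (IH (s ++ c ++ t) _ s c t erefl); rewrite Eb; exact: lstep_ctx.
- move: Hs Hz; rewrite Ep !size_cat => Hs Hz; lia.
- apply: (IH (s ++ c ++ t) _ s c t erefl); rewrite Eb; exact: lstep_ctx.
- apply: (IHn (s ++ s') c (t' ++ t)).
    move: Hs Hz; rewrite Ep !size_cat => Hs Hz; lia.
  by rewrite Eb Ep -!catA.
Qed.

End Factor.

Section Mset.
Variable A : Type.
Variable e : A -> A -> Prop.

Definition mstep (l l' : seq A) : Prop :=
  exists A1 b B C, l = A1 ++ b :: B /\ l' = A1 ++ C ++ B /\ forall c, List.In c C -> e b c.

Lemma SN_mstep : (forall b, SN e b) -> forall l, SN mstep l.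
Proof.
move=> HS.
have P : forall b, SN e b -> forall M, SN mstep M -> SN mstep (b :: M).
  move=> b; elim=> {}b _ IHb M; elim=> {}M HM IHM.
  constructor => l' [A1 [b' [B [C [E1 [E2 HC]]]]]].
  case: A1 E1 E2 => [|a A1] /= [Eb EM] E2.
  - rewrite E2 -EM; rewrite -Eb in HC; clear E2 Eb EM.
    elim: C HC => [|c C IHC] HC /=.
      by constructor => y Hy; apply: HM; exact: Hy.
    apply: IHb; first by apply: HC; left.
    by apply: IHC => x Hx; apply: HC; right.
  - rewrite E2 -Eb; apply: IHM; exists A1, b', B, C; split => //.
elim=> [|a l IH]; last exact: P.
by constructor => y [A1 [b [B [C [E _]]]]]; case: A1 E.
Qed.

End Mset.

Definition ext (A : Type) (Sg : semigroup) (h : A -> Sg) (w : word A) : Sg :=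
  foldl (fun acc z => sg_op acc (h z)) (h w.1) w.2.

Lemma foldl_op (A : Type) (Sg : semigroup) (h : A -> Sg) (x y : Sg) s :
  foldl (fun acc z => sg_op acc (h z)) (sg_op x y) s =
  sg_op x (foldl (fun acc z => sg_op acc (h z)) y s).
Proof. by elim: s x y => //= a s IH x y; rewrite -sg_assoc IH. Qed.

Lemma ext_wcat (A : Type) (Sg : semigroup) (h : A -> Sg) (a b : word A) :
  ext h (wcat a b) = sg_op (ext h a) (ext h b).
Proof. by rewrite /ext /wcat /wd /= foldl_cat /= foldl_op. Qed.

Lemma hom_ext (A : Type) (Sg : semigroup) (k : free_sg A -> Sg) :
  sg_hom k -> forall w, k w = ext (fun a => k (a, [::])) w.
Proof.
move=> Hk [z s]; elim/last_ind: s => [|s a IH] //.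
have -> : (z, rcons s a) = wcat (z, s) (a, [::]) by rewrite /wcat /= cats1.
by rewrite (Hk (z, s) (a, [::])) ext_wcat -IH.
Qed.

Definition wmap (A B : Type) (F : A -> B) (w : word A) : word B := (F w.1, map F w.2).

Lemma wd_wmap (A B : Type) (F : A -> B) w : wd (wmap F w) = map F (wd w).
Proof. by []. Qed.

Lemma ext_wmap (A B : Type) (Sg : semigroup) (h : B -> Sg) (F : A -> B) w :
  ext h (wmap F w) = ext (fun a => h (F a)) w.
Proof. by case: w => z s; rewrite /ext /=; elim: s (h (F z)) => //= a s IH x. Qed.

Lemma wmap_inj (A B : Type) (F : A -> B) : injective F -> injective (wmap F).
Proof. by move=> HF [a s] [b t] [/HF -> /(inj_map HF) ->]. Qed.

Lemma In_cat (A : Type) (x : A) s t : List.In x (s ++ t) <-> List.In x s \/ List.In x t.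
Proof. elim: s => /= [|a s IH]; [tauto|rewrite IH; tauto]. Qed.

Lemma In_map (A B : Type) (F : A -> B) x s : List.In x (map F s) <-> exists y, List.In y s /\ x = F y.
Proof.
elim: s => /= [|a s IH]; first by split=> [[]|[y []]].
rewrite IH; split.
  by case=> [<-|[y [Hy ->]]]; [exists a; split; [left|]|exists y; split; [right|]].
by case=> y [[<-|Hy] ->]; [left|right; exists y].
Qed.

Lemma In_flatten (A : Type) (x : A) ss : List.In x (flatten ss) <-> exists s, List.In s ss /\ List.In x s.
Proof.
elim: ss => /= [|s ss IH]; first by split=> [[]|[y []]].
rewrite In_cat IH; split.
  by case=> [H|[t [Ht H]]]; [exists s; split; [left|]|exists t; split; [right|]].
by case=> t [[<-|Ht] H]; [left|right; exists t].
Qed.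

Lemma In_mem (A : eqType) (x : A) s : x \in s -> List.In x s.
Proof. by elim: s => //= a s IH; rewrite in_cons => /orP [/eqP ->|/IH]; [left|right]. Qed.

Section Pieces.
Variables X Y : Type.
Notation Z := (X + Y)%type.

Fixpoint pieces (w : seq Z) : seq (seq Y) :=
  match w with
  | [::] => [:: [::]]
  | inl _ :: w' => [::] :: pieces w'
  | inr y :: w' => match pieces w' with p :: ps => (y :: p) :: ps | [::] => [::] end
  end.

Lemma pieces_cons w : exists p ps, pieces w = p :: ps.
Proof.
elim: w => [|[x|y] w [p [ps IH]]] /=; first by exists [::], [::].
  by exists [::], (pieces w).
by rewrite IH; exists (y :: p), ps.
Qed.

Lemma pieces_rcons w : exists ps p, pieces w = rcons ps p.
Proof.
have [p [ps E]] := pieces_cons w; rewrite E.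
case/lastP: ps E => [|ps q] E; first by exists [::], p.
by exists (p :: ps), q; rewrite rcons_cons.
Qed.

Lemma pieces_cat a b ps p q qs : pieces a = rcons ps p -> pieces b = q :: qs ->
  pieces (a ++ b) = ps ++ (p ++ q) :: qs.
Proof.
move=> + Hb; elim: a ps p => [|[x|y] a IH] ps p /=.
- by case: ps => [|? []] //= [<-].
- have [ps' [p' E]] := pieces_rcons a; rewrite E.
  case: ps => [|r ps] /=; first by case: ps' {E}.
  by case=> <- E2; case: (rcons_inj E2) => <- <-; rewrite (IH ps' p' E).
- have [ps' [p' E]] := pieces_rcons a; rewrite E (IH _ _ E).
  case: ps' E => [|r ps'] E /=.
    by case: ps => [|? []] //= [<-].
  by rewrite -rcons_cons => /rcons_inj [<- <-].
Qed.

Lemma pieces_inl u w : pieces (map inl u ++ w) = nseq (size u) [::] ++ pieces w.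
Proof. by elim: u => //= x u ->. Qed.

Lemma pieces_inr u w q qs : pieces w = q :: qs -> pieces (map inr u ++ w) = (u ++ q) :: qs.
Proof. by move=> E; elim: u => //= y u ->. Qed.

Definition pos (p : seq Y) := 0 < size p.
Definition blocks (w : seq Z) := filter pos (pieces w).
Definition pX (w : seq Z) : seq X := pmap (fun z => if z is inl x then Some x else None) w.

Lemma pX_cat a b : pX (a ++ b) = pX a ++ pX b.
Proof. exact: pmap_cat. Qed.
Lemma pX_inl u : pX (map inl u) = u.
Proof. by elim: u => //= x u ->. Qed.
Lemma pX_inr u : pX (map inr u) = [::].
Proof. by elim: u. Qed.

Section B.
Variables (w1 w2 : seq Z) (A B : seq (seq Y)) (L H : seq Y).
Hypothesis (H1 : pieces w1 = rcons A L) (H2 : pieces w2 = H :: B).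

Lemma filter_nseq n : filter pos (nseq n [::]) = [::].
Proof. by elim: n. Qed.

Lemma blocks_inl x s : blocks (w1 ++ map inl (x :: s) ++ w2) =
  filter pos A ++ filter pos [:: L; H] ++ filter pos B.
Proof.
rewrite /blocks (pieces_cat (b := map inl (x :: s) ++ w2) H1 (q := [::]) (qs := nseq (size s) [::] ++ H :: B)).
  rewrite cats0 !filter_cat; congr (_ ++ _) => /=.
  by rewrite filter_cat filter_nseq /=; case: (pos L); case: (pos H).
by rewrite /= pieces_inl H2.
Qed.

Lemma blocks_inr u : blocks (w1 ++ map inr u ++ w2) =
  filter pos A ++ filter pos [:: L ++ u ++ H] ++ filter pos B.
Proof.
rewrite /blocks (pieces_cat H1 (pieces_inr u H2)).
by rewrite !filter_cat; congr (_ ++ _); rewrite -cat1s filter_cat.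
Qed.

Lemma blocks_xy x y : blocks (w1 ++ [:: inl x; inr y] ++ w2) =
  filter pos A ++ filter pos [:: L] ++ [:: y :: H] ++ filter pos B.
Proof.
rewrite /blocks (pieces_cat (b := [:: inl x; inr y] ++ w2) H1 (q := [::]) (qs := (y :: H) :: B)).
  by rewrite cats0 !filter_cat; congr (_ ++ _); rewrite /= /pos /=; case: (0 < size L).
have -> : pieces ([:: inl x; inr y] ++ w2) = [::] :: pieces (map inr [:: y] ++ w2) by [].
by rewrite (pieces_inr _ H2).
Qed.

Lemma blocks_yx x y : blocks (w1 ++ [:: inr y; inl x] ++ w2) =
  filter pos A ++ [:: L ++ [:: y]] ++ filter pos [:: H] ++ filter pos B.
Proof.
rewrite /blocks (pieces_cat (b := [:: inr y; inl x] ++ w2) H1 (q := [:: y]) (qs := H :: B)).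
  rewrite !filter_cat; congr (_ ++ _); rewrite /= {1}/pos size_cat addnS /=.
  by case: (pos H).
change (pieces (map inr [:: y] ++ (inl x :: w2)) = [:: [:: y], H & B]).
by rewrite (pieces_inr [:: y] (w := inl x :: w2) (q := [::]) (qs := pieces w2)) // H2.
Qed.
End B.

End Pieces.

Section Main.
Variables (S T U : semigroup) (I : S -> Prop).
Hypothesis HI : is_ideal I.
Variable g : T -> S.
Hypotheses (hg : sg_hom g) (ginj : injective g) (gI : forall s, I s <-> exists t, g t = s).
Variable f : S -> U.
Hypotheses (hf : sg_hom f) (fsurj : forall a, exists b, f b = a)
  (fker : forall b b', f b = f b' <-> rees_cong I b b').
Variables (X : finType) (RT : rules X) (psi : free_sg X -> T).
Hypotheses (HRT : complete RT) (hpsi : sg_hom psi) (psurj : forall a, exists b, psi b = a)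
  (pker : forall b b', psi b = psi b' <-> gen_cong RT b b').
Variables (Y : finType) (RU : rules Y) (phi : free_sg Y -> U).
Hypotheses (HRU : complete RU) (hphi : sg_hom phi) (phsurj : forall a, exists b, phi b = a)
  (phker : forall b b', phi b = phi b' <-> gen_cong RU b b').

Notation Z := (X + Y)%type.

Definition lift (u : U) : S := sval (constructive_indefinite_description _ (fsurj u)).
Lemma liftK u : f (lift u) = u.
Proof. exact: svalP (constructive_indefinite_description _ (fsurj u)). Qed.

Definition h (z : Z) : S :=
  match z with inl x => g (psi (x, [::])) | inr y => lift (phi (y, [::])) end.
Definition pi (w : word Z) : S := ext h w.

Lemma pi_hom : @sg_hom (free_sg Z) S pi.
Proof. move=> a b; exact: ext_wcat. Qed.

Lemma pi_inl w : pi (wmap inl w) = g (psi w).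
Proof.
rewrite /pi ext_wmap.
have Hk : @sg_hom (free_sg X) S (fun w => g (psi w)) by move=> a b; rewrite hpsi hg.
by rewrite (hom_ext Hk w).
Qed.

Lemma pi_inr w : f (pi (wmap inr w)) = phi w.
Proof.
rewrite /pi ext_wmap.
set h' := fun a : Y => h (inr a).
have Hk : @sg_hom (free_sg Y) U (fun w => f (ext h' w)) by move=> a b; rewrite ext_wcat hf.
rewrite (hom_ext Hk w) (hom_ext hphi w); congr ext.
by apply: functional_extensionality => a; rewrite /h' /= liftK.
Qed.

Lemma I_inl w : I (pi (wmap inl w)).
Proof. by rewrite pi_inl; apply/gI; exists (psi w). Qed.

Lemma nfX_ex s : exists w : word X, I s -> g (psi w) = s.
Proof.
case: (classic (I s)) => Hs.
  have [t Ht] := (gI s).1 Hs; have [w Hw] := psurj t.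
  by exists w => _; rewrite Hw.
have [t0 Ht0] := HI.1; have [t Ht] := (gI t0).1 Ht0; have [w Hw] := psurj t.
by exists w.
Qed.

Definition nfX (s : S) : word X := sval (constructive_indefinite_description _ (nfX_ex s)).
Lemma nfX_spec s : I s -> g (psi (nfX s)) = s.
Proof. exact: svalP (constructive_indefinite_description _ (nfX_ex s)). Qed.

Definition rX (s : S) : word Z := wmap inl (nfX s).
Lemma pi_rX s : I s -> pi (rX s) = s.
Proof. by move=> Hs; rewrite /rX pi_inl nfX_spec. Qed.

Definition dec (P : Prop) := excluded_middle_informative P.

Definition RA : rules Z := map (fun uv : word X * word X => (wmap inl uv.1, wmap inl uv.2)) RT.
Definition ruleB (uv : word Y * word Y) : word Z * word Z :=
  if dec (I (pi (wmap inr uv.1))) then (wmap inr uv.1, rX (pi (wmap inr uv.1)))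
  else (wmap inr uv.1, wmap inr uv.2).
Definition RB : rules Z := map ruleB RU.
Definition RD : rules Z :=
  match dec (exists z, irr RU z /\ I (pi (wmap inr z))) with
  | left H => let z := sval (constructive_indefinite_description _ H) in
              [:: (wmap inr z, rX (pi (wmap inr z)))]
  | right _ => [::]
  end.
Definition ruleE (x : X) (y : Y) : rules Z :=
  [:: ((inl x, [:: inr y]), rX (sg_op (h (inl x)) (h (inr y))));
      ((inr y, [:: inl x]), rX (sg_op (h (inr y)) (h (inl x))))].
Definition RE : rules Z := flatten (map (fun x => flatten (map (ruleE x) (enum Y))) (enum X)).
Definition Rall : rules Z := RA ++ RB ++ RD ++ RE.

Lemma In_RE x y r : List.In r (ruleE x y) -> List.In r Rall.
Proof.
move=> H; rewrite /Rall !In_cat; right; right; right.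
apply/In_flatten; exists (flatten (map (ruleE x) (enum Y))); split.
  by apply/In_map; exists x; split => //; apply: In_mem; rewrite mem_enum.
apply/In_flatten; exists (ruleE x y); split => //.
by apply/In_map; exists y; split => //; apply: In_mem; rewrite mem_enum.
Qed.

Lemma I_h_inl x : I (h (inl x)).
Proof. by apply/gI; exists (psi (x, [::])). Qed.

Lemma rule_sound l r : List.In (l, r) Rall -> pi l = pi r.
Proof.
rewrite /Rall !In_cat => [[|[|[]]]].
- case/In_map => [[u v] [Huv [-> ->]]] /=; rewrite !pi_inl; congr g; apply: (pker u v).2.
  by move=> rr _ HR; apply: HR.
- case/In_map => [[u v] [Huv]]; rewrite /ruleB /=.
  case: (dec _) => HIu [-> ->]; first by rewrite pi_rX.
  have : f (pi (wmap inr u)) = f (pi (wmap inr v)).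
    rewrite !pi_inr; apply: (phker u v).2; by move=> rr _ HR; apply: HR.
  by case/fker => // [[]].
- rewrite /RD; case: (dec _) => // H /= [] // [<- <-].
  by rewrite pi_rX //; case: (svalP (constructive_indefinite_description _ H)).
- case/In_flatten => s [/In_map [x [_ ->]]] /In_flatten [s' [/In_map [y [_ ->]]]].
  rewrite /ruleE /= => [[|[]]] // [<- <-]; rewrite pi_rX //.
    exact: ((HI.2 (h (inr y)) _ (I_h_inl x)).2).
  exact: ((HI.2 (h (inr y)) _ (I_h_inl x)).1).
Qed.

Lemma gen_pi a b : gen_cong Rall a b -> pi a = pi b.
Proof.
move=> H; apply: (H (fun a b => pi a = pi b)); last exact: rule_sound.
split; [by []|split; [by []|split; [by move=> ? ? ? -> ->|]]].
by move=> x y z E; rewrite !pi_hom E.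
Qed.


Lemma rshape l r : List.In (l, r) Rall ->
  (exists u v, List.In (u, v) RT /\ l = wmap inl u /\ r = wmap inl v)
  \/ (exists u v, List.In (u, v) RU /\ l = wmap inr u /\ r = wmap inr v)
  \/ (exists s, r = wmap inl s /\ ((exists u, l = wmap inr u) \/
        (exists x y, l = (inl x, [:: inr y])) \/ (exists x y, l = (inr y, [:: inl x])))).
Proof.
rewrite /Rall !In_cat => [[|[|[]]]].
- case/In_map => [[u v] [Huv [-> ->]]]; left; by exists u, v.
- case/In_map => [[u v] [Huv]]; rewrite /ruleB /=.
  case: (dec _) => HIu [-> ->].
    by right; right; exists (nfX (pi (wmap inr u))); split => //; left; exists u.
  by right; left; exists u, v.
- rewrite /RD; case: (dec _) => // H /= [] // [<- <-].
  right; right; eexists; split; first reflexivity; left; eexists; reflexivity.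
- case/In_flatten => s [/In_map [x [_ ->]]] /In_flatten [s' [/In_map [y [_ ->]]]].
  rewrite /ruleE /= => [[|[]]] // [<- <-]; right; right; eexists; split; try reflexivity.
    by right; left; exists x, y.
  by right; right; exists x, y.
Qed.

Lemma In_filter1 c p : List.In c (filter (@pos Y) [:: p]) -> c = p.
Proof. by rewrite /=; case: (pos p) => //= [[]]. Qed.

Lemma filter_pos2 (p q : seq Y) : filter (@pos Y) [:: p; q] = filter (@pos Y) [:: p] ++ filter (@pos Y) [:: q].
Proof. by rewrite -cat1s filter_cat. Qed.

Lemma measure a b : step Rall a b ->
  mstep (eY RU) (blocks (wd a)) (blocks (wd b)) \/
  (blocks (wd a) = blocks (wd b) /\ lstep RT (pX (wd a)) (pX (wd b))).
Proof.
case=> w1 [w2 [l [r [Hin [-> ->]]]]].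
have [A [L H1]] := pieces_rcons w1.
have [Hh [B H2]] := pieces_cons w2.
case: (rshape Hin) => [[u [v [Huv [-> ->]]]]|[[u [v [Huv [-> ->]]]]|[s [-> Hl]]]].
- right; rewrite !wd_wmap; split.
    by case: u {Huv} => x1 s1; case: v => x2 s2; rewrite !(blocks_inl H1 H2).
  rewrite !pX_cat !pX_inl; by exists (pX w1), (pX w2), u, v.
- left; rewrite !wd_wmap !(blocks_inr H1 H2).
  exists (filter (@pos Y) A), (L ++ wd u ++ Hh), (filter (@pos Y) B), (filter (@pos Y) [:: L ++ wd v ++ Hh]).
  have Hp : pos (L ++ wd u ++ Hh) by rewrite /pos !size_cat /=; lia.
  split; first by rewrite /= Hp.
  split => // c /In_filter1 ->; left; apply: lstep_ctx.
  by exists [::], [::], u, v; rewrite !cats0.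
- left; rewrite wd_wmap; case: s => x0 s0; rewrite (blocks_inl H1 H2).
  case: Hl => [[u ->]|[[x [y ->]]|[x [y ->]]]].
  + rewrite wd_wmap (blocks_inr H1 H2).
    exists (filter (@pos Y) A), (L ++ wd u ++ Hh), (filter (@pos Y) B), (filter (@pos Y) [:: L; Hh]).
    have Hp : pos (L ++ wd u ++ Hh) by rewrite /pos !size_cat /=; lia.
    split; first by rewrite /= Hp.
    split => // c; rewrite filter_pos2 In_cat => [[/In_filter1 ->|/In_filter1 ->]]; right.
      by exists [::], (wd u ++ Hh); rewrite size_cat.
    by exists (L ++ wd u), [::]; rewrite cats0 -catA; split => //; rewrite !size_cat /=; lia.
  + rewrite [wd _]/= (blocks_xy H1 H2).
    exists (filter (@pos Y) A ++ filter (@pos Y) [:: L]), (y :: Hh), (filter (@pos Y) B), (filter (@pos Y) [:: Hh]).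
    split; first by rewrite -!catA.
    split; first by rewrite filter_pos2 -!catA.
    by move=> c /In_filter1 ->; right; exists [:: y], [::]; rewrite cats0.
  + rewrite [wd _]/= (blocks_yx H1 H2).
    exists (filter (@pos Y) A), (L ++ [:: y]), (filter (@pos Y) [:: Hh] ++ filter (@pos Y) B), (filter (@pos Y) [:: L]).
    split; first by [].
    split; first by rewrite filter_pos2 -!catA.
    by move=> c /In_filter1 ->; right; exists [::], [:: y].
Qed.

Lemma all_SN : forall w, SN (step Rall) w.
Proof.
have SNT := SN_lstep (noeth_SN HRT.1).
have SNM := SN_mstep (SN_eY (SN_lstep (noeth_SN HRU.1))).
suff H : forall M, SN (mstep (eY RU)) M -> forall w, blocks (wd w) = M -> SN (step Rall) w.
  by move=> w; apply: (H _ (SNM _) w erefl).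
move=> M; elim=> {}M _ IHM.
suff H : forall P, SN (lstep RT) P -> forall w, blocks (wd w) = M -> pX (wd w) = P -> SN (step Rall) w.
  by move=> w Ew; apply: (H _ (SNT _) w Ew erefl).
move=> P; elim=> {}P _ IHP w EM EP; constructor => w' Hs.
case: (measure Hs) => [Hm|[Eb Hl]].
  by apply: (IHM (blocks (wd w'))) => //; rewrite -EM.
by apply: (IHP (pX (wd w'))) => //; rewrite -?EP -?EM.
Qed.

Lemma split3 (w : seq Z) : (exists u, w = map inl u) \/ (exists u, w = map inr u) \/
  exists w1 w2 x y, (w = w1 ++ [:: inl x; inr y] ++ w2 \/ w = w1 ++ [:: inr y; inl x] ++ w2).
Proof.
elim: w => [|z w [[u ->]|[[u ->]|[w1 [w2 [x [y [->|->]]]]]]]]; first by left; exists [::].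
- case: z => [x|y]; first by left; exists (x :: u).
  case: u => [|x u]; first by right; left; exists [:: y].
  by right; right; exists [::], (map inl u), x, y; right.
- case: z => [x|y]; last by right; left; exists (y :: u).
  case: u => [|y u]; first by left; exists [:: x].
  by right; right; exists [::], (map inr u), x, y; left.
- by right; right; exists (z :: w1), w2, x, y; left.
- by right; right; exists (z :: w1), w2, x, y; right.
Qed.

Lemma step_of (R : rules Z) a w1 w2 l r : List.In (l, r) R -> wd a = w1 ++ wd l ++ w2 ->
  exists b, step R a b.
Proof.
move=> Hin E; exists (pre w1 (app r w2)); exists w1, w2, l, r; split => //; split => //.
by rewrite wd_pre wd_app.
Qed.

Lemma uniqU z z' : irr RU z -> irr RU z' -> I (pi (wmap inr z)) -> I (pi (wmap inr z')) -> z = z'.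
Proof.
move=> Hz Hz' Iz Iz'.
have : f (pi (wmap inr z)) = f (pi (wmap inr z')) by apply/fker; right.
rewrite !pi_inr => /phker Hg; exact: NFU HRU.2 Hg Hz Hz'.
Qed.

Lemma RD_spec b : irr RU b -> I (pi (wmap inr b)) -> List.In (wmap inr b, rX (pi (wmap inr b))) RD.
Proof.
move=> Hb Ib; rewrite /RD; case: (dec _) => [H|H]; last by case: H; exists b.
case: (svalP (constructive_indefinite_description _ H)) => Hz Iz.
by rewrite (uniqU Hz Hb Iz Ib); left.
Qed.

Lemma irr_shape n : irr Rall n ->
  (exists a, n = wmap inl a /\ irr RT a) \/ (exists b, n = wmap inr b /\ irr RU b /\ ~ I (pi n)).
Proof.
move=> Hn; case: (split3 (wd n)) => [[u Eu]|[[u Eu]|[w1 [w2 [x [y [E|E]]]]]]].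
- case: u Eu => [|x u] Eu; first by move: Eu; case: (n).
  have En : n = wmap inl (x, u) by apply: wd_inj; rewrite Eu.
  left; exists (x, u); split => // a' [w1 [w2 [l [r [Hin [Ea Eb]]]]]].
  have [b' Hb'] : exists b', step Rall n b'.
    apply: (step_of (w1 := map inl w1) (w2 := map inl w2) (l := wmap inl l) (r := wmap inl r)).
      by rewrite /Rall In_cat; left; apply/In_map; exists (l, r).
    by rewrite En wd_wmap Ea !map_cat.
  exact: Hn Hb'.
- case: u Eu => [|y u] Eu; first by move: Eu; case: (n).
  have En : n = wmap inr (y, u) by apply: wd_inj; rewrite Eu.
  have Hirr : irr RU (y, u).
    move=> a' [w1 [w2 [l [r [Hin [Ea Eb]]]]]].
    have [b' Hb'] : exists b', step Rall n b'.
      apply: (step_of (w1 := map inr w1) (w2 := map inr w2) (l := wmap inr l) (r := (ruleB (l, r)).2)).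
        rewrite /Rall In_cat; right; rewrite In_cat; left; apply/In_map; exists (l, r); split => //.
        by rewrite /ruleB /=; case: (dec _).
      by rewrite En wd_wmap Ea !map_cat.
    exact: Hn Hb'.
  right; exists (y, u); split => //; split => // HIn.
  have HD : List.In (wmap inr (y, u), rX (pi (wmap inr (y, u)))) RD by apply: RD_spec => //; rewrite -En.
  have [b' Hb'] : exists b', step Rall n b'.
    apply: (step_of (R := Rall) (w1 := [::]) (w2 := [::]) (l := wmap inr (y, u)) (r := rX (pi (wmap inr (y, u))))).
      by rewrite /Rall !In_cat; right; right; left.
    by rewrite En cats0.
  exact: Hn Hb'.
- have [b' Hb'] := step_of (In_RE (or_introl erefl : List.In _ (ruleE x y))) E.
  by case: (Hn _ Hb').
- have [b' Hb'] := step_of (In_RE (or_intror (or_introl erefl) : List.In _ (ruleE x y))) E.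
  by case: (Hn _ Hb').
Qed.

Lemma inj_irr n n' : irr Rall n -> irr Rall n' -> pi n = pi n' -> n = n'.
Proof.
move=> Hn Hn'.
case: (irr_shape Hn) => [[a [-> Ha]]|[b [-> [Hb NIb]]]];
case: (irr_shape Hn') => [[a' [-> Ha']]|[b' [-> [Hb' NIb']]]] => E.
- move: E; rewrite !pi_inl => /ginj /pker Hg; by rewrite (NFU HRT.2 Hg Ha Ha').
- by case: NIb'; rewrite -E; apply: I_inl.
- by case: NIb; rewrite E; apply: I_inl.
- have : f (pi (wmap inr b)) = f (pi (wmap inr b')) by rewrite E.
  rewrite !pi_inr => /phker Hg; by rewrite (NFU HRU.2 Hg Hb Hb').
Qed.

Lemma main_fcrs : fcrs_defined S.
Proof.
exists (X + Y)%type, Rall; split; first split.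
- exact: SN_noeth all_SN.
- move=> u v v' H1 H2.
  have [n [Hn Ni]] := SN_nf (all_SN v).
  have [n' [Hn' Ni']] := SN_nf (all_SN v').
  exists n; split => //; suff -> : n = n' by [].
  apply: inj_irr => //.
  rewrite -(gen_pi (star_gen Hn)) -(gen_pi (star_gen Hn')).
  by rewrite -(gen_pi (star_gen H1)) -(gen_pi (star_gen H2)).
- exists pi; split; first exact: pi_hom.
  split.
    move=> s; case: (classic (I s)) => Hs; first by exists (rX s); rewrite pi_rX.
    have [w Hw] := phsurj (f s); exists (wmap inr w).
    have : f (pi (wmap inr w)) = f s by rewrite pi_inr.
    by case/fker => // [[_ ]].
  move=> b b'; split; last exact: gen_pi.
  move=> E.
  have [n [Hn Ni]] := SN_nf (all_SN b).
  have [n' [Hn' Ni']] := SN_nf (all_SN b').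
  have Enn : n = n'.
    apply: inj_irr => //; by rewrite -(gen_pi (star_gen Hn)) -(gen_pi (star_gen Hn')).
  apply: gen_trans (star_gen Hn) _; rewrite Enn; exact: gen_sym (star_gen Hn').
Qed.

End Main.

Theorem theorem1p2 (S T U : semigroup) :
  ideal_extension S T U -> fcrs_defined T -> fcrs_defined U -> fcrs_defined S.
Proof.
move=> [I [HI [[g [hg [ginj gI]]] [f [hf [fsurj fker]]]]]].
move=> [X [RT [HRT [psi [hpsi [psurj pker]]]]]] [Y [RU [HRU [phi [hphi [phsurj phker]]]]]].
exact: (main_fcrs HI hg ginj gI hf fsurj fker HRT hpsi psurj pker HRU hphi phsurj phker).
Qed.
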